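(* Let $q\in L_1[0,\pi]$ with $C_0=0$ and suppose $q\in E$, i.e. $C_n=O(1/n)$ as $n\to\infty$. Then $S_1(n,q)=O(n^{-2})$ as $n\to\infty$, where \[ S_1(n,q)=\sum_{\substack{k,l\in\mathbb{Z}\\ k,\,k+l\neq0,-2n}}\frac{C_kC_lC_{-k-l}}{k(k+l)} . \]
   Context: $q$ is a complex-valued summable function on $[0,\pi]$; $C_k=\frac{1}{\pi}\int_0^\pi q(x)\cos kx\,dx$ for $k\in\mathbb{Z}$ (so $C_{-k}=C_k$), and it is assumed that $C_0=0$. $E$ is the set of such $q$ with $C_n=O(1/n)$ as $n\to\infty$. $n$ is a positive integer. *)

(* Defs.v *)
From mathcomp Require Import all_boot all_algebra.
From mathcomp Require Import complex.
From mathcomp Require Import all_classical all_reals all_analysis.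
Import GRing.Theory Num.Theory ComplexField numFieldNormedType.Exports.
Set Implicit Arguments. Unset Strict Implicit. Unset Printing Implicit Defensive.
Local Open Scope ring_scope.
Local Open Scope complex_scope.
Local Open Scope classical_set_scope.

(* A complex-valued function q on [0,pi] is given by its real part qr and
   imaginary part qi : R -> R.  q in L_1[0,pi] means both are Lebesgue
   integrable on [0,pi]. *)
Definition L1_0pi (R : realType) (f : R -> R) : Prop :=
  (lebesgue_measure : set R -> \bar R).-integrable `[0, pi]%classic (EFin \o f).

Definition Ccoef (R : realType) (qr qi : R -> R) (k : int) : R[i] :=
  ((pi^-1 * Rintegral (lebesgue_measure : set R -> \bar R) `[0, pi]%classic
             (fun x => qr x * cos (k%:~R * x)))
   +i* (pi^-1 * Rintegral (lebesgue_measure : set R -> \bar R) `[0, pi]%classic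
             (fun x => qi x * cos (k%:~R * x)))).

Definition S1_term (R : realType) (qr qi : R -> R) (n : nat) (k l : int) : R[i] :=
  if (k != 0) && (k != - (2 * n)%:Z) && (k + l != 0) && (k + l != - (2 * n)%:Z)
  then Ccoef qr qi k * Ccoef qr qi l * Ccoef qr qi (- k - l) / ((k * (k + l))%:~R)
  else 0.

Definition S1_partial (R : realType) (qr qi : R -> R) (n N : nat) : R[i] :=
  \sum_(i < (2 * N).+1) \sum_(j < (2 * N).+1)
     S1_term qr qi n (i%:Z - N%:Z) (j%:Z - N%:Z).

Definition S1 (R : realType) (qr qi : R -> R) (n : nat) : R[i] :=
  (lim ((fun N => (complex.Re (S1_partial qr qi n N) : R)) @ \oo))
  +i* (lim ((fun N => (complex.Im (S1_partial qr qi n N) : R)) @ \oo)).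

(* Main.v *)
Require Import Defs.
From mathcomp Require Import all_boot all_order all_algebra.
From mathcomp Require Import complex.
From mathcomp Require Import all_classical all_reals all_analysis.
From mathcomp Require Import zify ring lra.
Import Order.TTheory GRing.Theory Num.Theory ComplexField numFieldNormedType.Exports.
Local Open Scope ring_scope.
Local Open Scope complex_scope.
Local Open Scope classical_set_scope.

Section Sums.
Variable R : realFieldType.

Definition vv (k : int) : R := ((absz k)%:R)^-1.
Definition uu (k : int) : R := vv k ^+ 2.
Definition rng (N : nat) : seq int := [seq (i%:Z - N%:Z) | i <- iota 0 (2*N).+1].

Lemma mem_rng N k : (k \in rng N) = (absz k <= N)%N.
Proof.
apply/mapP/idP.
  by move=> [j]; rewrite mem_iota => Hi ->; lia.
move=> H; exists (absz (k + N%:Z)%R); last by lia.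
rewrite mem_iota; lia.
Qed.

Lemma uniq_rng N : uniq (rng N).
Proof.
rewrite map_inj_uniq ?iota_uniq // => i j /addIr [].
done.
Qed.

Lemma vv_ge0 k : 0 <= vv k. Proof. by rewrite /vv invr_ge0 ler0n. Qed.
Lemma uu_ge0 k : 0 <= uu k. Proof. by rewrite /uu exprn_ge0 // vv_ge0. Qed.
Lemma vvN k : vv (- k) = vv k. Proof. by rewrite /vv abszN. Qed.
Lemma uuN k : uu (- k) = uu k. Proof. by rewrite /uu vvN. Qed.
Lemma vv_le1 k : vv k <= 1.
Proof.
rewrite /vv; case: (absz k) => [|n]; first by rewrite invr0.
by rewrite invf_le1 ?ltr0n // ler1n.
Qed.
Lemma vv_tail (N : nat) k : (N < absz k)%N -> vv k <= (N.+1%:R)^-1.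
Proof.
move=> H; rewrite /vv lef_pV2 ?posrE ?ltr0n ?ler_nat //; lia.
Qed.

Lemma sum_sub (T : eqType) (s1 s2 : seq T) (f : T -> R) :
  uniq s1 -> uniq s2 -> {subset s1 <= s2} -> (forall x, 0 <= f x) ->
  \sum_(x <- s1) f x <= \sum_(x <- s2) f x.
Proof.
move=> u1 u2 sub f0.
rewrite [X in _ <= X](bigID (fun x => x \in s1)) /= -[X in _ <= X + _ ]big_filter.
have -> : \sum_(i <- [seq i <- s2 | i \in s1]) f i = \sum_(x <- s1) f x.
  apply: perm_big; apply: uniq_perm; rewrite ?filter_uniq //.
  by move=> x; rewrite mem_filter; case H: (x \in s1) => //=; rewrite sub.
by rewrite lerDl sumr_ge0.
Qed.

Lemma harm K a : (0 < a)%N ->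
  \sum_(i <- iota a K) uu i%:Z + 2 / (a + K)%:R <= 2 / a%:R.
Proof.
elim: K a => [|K IH] a a0; first by rewrite big_nil add0r addn0.
rewrite /= big_cons -addrA -addSnnS.
have := IH a.+1 isT => H.
apply: le_trans (lerD (lexx _) H) _.
rewrite /uu /vv /=.
have x1 : 1 <= a%:R :> R by rewrite ler1n.
have xn0 : a%:R != 0 :> R by rewrite pnatr_eq0 -lt0n.
have x1n0 : a.+1%:R != 0 :> R by rewrite pnatr_eq0.
have -> : (a%:R^-1) ^+ 2 + 2 / a.+1%:R = 2 / a%:R - (a%:R - 1) / (a%:R ^+ 2 * a.+1%:R) :> R.
  rewrite -natr1 in x1n0 *; field; rewrite x1n0 xn0 //.
rewrite lerBlDr lerDl divr_ge0 ?subr_ge0 // ?mulr_ge0 ?exprn_ge0 ?ler0n //.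
Qed.

Lemma harm' K a : (0 < a)%N -> \sum_(i <- iota a K) uu i%:Z <= 2 / a%:R.
Proof.
move=> a0. have H := harm K a a0. apply: le_trans H. rewrite lerDl divr_ge0 ?ler0n //.
Qed.

Lemma abs_le_sum (s : seq int) m : m \in s -> uniq s -> (absz m <= \sum_(x <- s) absz x)%N.
Proof. by move=> ms us; rewrite (bigD1_seq m) //= leq_addr. Qed.

Lemma tail (s : seq int) (N : nat) : uniq s ->
  \sum_(m <- s | (N < absz m)%N) uu m <= 4 / N.+1%:R.
Proof.
move=> us; set K := (\sum_(x <- s) absz x)%N.
set t1 := [seq (i%:Z) | i <- iota N.+1 K].
set t2 := [seq (- i%:Z) | i <- iota N.+1 K].
apply: (@le_trans _ _ (\sum_(m <- t1 ++ t2) uu m)).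
  rewrite -big_filter; apply: sum_sub; rewrite ?filter_uniq //.
  - rewrite cat_uniq !map_inj_uniq ?iota_uniq //; try (by move=> i j /oppr_inj []);
      try (by move=> i j []).
    rewrite andbT; apply/hasPn => x /mapP [i Hi ->]; apply/negP => /mapP [j Hj].
    move: Hi Hj; rewrite !mem_iota; lia.
  - move=> m; rewrite mem_filter => /andP [Hm ms].
    have := @abs_le_sum s m ms us; rewrite -/K => HK.
    rewrite mem_cat; case: (lerP 0 m) => m0; apply/orP; [left|right]; apply/mapP;
      exists (absz m); rewrite ?mem_iota; lia.
  - exact: uu_ge0.
rewrite big_cat !big_map.
under [X in _ + X <= _]eq_bigr => i _ do rewrite uuN.
have := harm' K N.+1 (ltn0Sn N) => H.
apply: le_trans (lerD H H) _.
by rewrite -mulrDl -natrD.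
Qed.

Lemma total (s : seq int) : uniq s -> \sum_(m <- s) uu m <= 4.
Proof.
move=> us; have := @tail s 0 us; rewrite divr1 => H; apply: le_trans H.
rewrite [X in X <= _](bigID (fun m => (0 < absz m)%N)) /= [X in _ + X]big1 ?addr0 // => m.
rewrite -leqNgt leqn0 => /eqP H; have -> : m = 0 by lia.
by rewrite /uu /vv invr0 expr0n.
Qed.

Lemma pt1 (s : seq int) a : uniq s -> \sum_(m <- s | m == a) uu m <= uu a.
Proof.
move=> us; rewrite -big_filter.
apply: (@le_trans _ _ (\sum_(m <- [:: a]) uu m)); last by rewrite big_seq1.
apply: sum_sub.
- by rewrite filter_uniq.
- by [].
- by move=> x; rewrite mem_filter inE => /andP [].
- exact: uu_ge0.
Qed.

Lemma double (s : seq int) (p1 p2 : pred int) a b : uniq s ->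
  \sum_(k <- s | p1 k) uu k <= a ->
  (forall t : seq int, uniq t -> \sum_(m <- t | p2 m) uu m <= b) -> 0 <= b ->
  \sum_(k <- s | p1 k) \sum_(l <- s | p2 (k + l)) uu k * uu (k + l) <= a * b.
Proof.
move=> us Ha Hb b0.
apply: (@le_trans _ _ (\sum_(k <- s | p1 k) uu k * b)).
  apply: ler_sum => k _; rewrite -mulr_sumr; apply: ler_wpM2l; first exact: uu_ge0.
  have -> : \sum_(l <- s | p2 (k + l)) uu (k + l) = \sum_(m <- map (fun l => k + l) s | p2 m) uu m.
    by rewrite big_map.
  by apply: Hb; rewrite map_inj_uniq // => x y /addrI.
by rewrite -mulr_suml ler_wpM2r.
Qed.

Lemma mulb_sum (T : Type) (s : seq T) (q : pred T) (g : T -> R) :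
  \sum_(x <- s) g x * (q x)%:R = \sum_(x <- s | q x) g x.
Proof. by rewrite [RHS]big_mkcond; apply: eq_bigr => x _; case: (q x); rewrite ?mulr1 ?mulr0. Qed.

Lemma D_hex (s : seq int) N : uniq s ->
  \sum_(k <- s) \sum_(l <- s | (N < absz (k + l)%R)%N) uu k * uu (k + l) <= 16 / N.+1%:R.
Proof.
move=> us.
have -> : 16 / N.+1%:R = 4 * (4 / N.+1%:R) :> R by rewrite mulrA -natrM.
apply: (@double s xpredT (fun m => (N < absz m)%N)) => //; first [by apply: total | by move=> t ut; apply: tail | by move=> t ut; apply: total | by apply: tail | by apply: pt1 | by move=> t ut; apply: pt1 | by rewrite divr_ge0 ?ler0n | exact: uu_ge0].
Qed.

Lemma D_cauchy (s : seq int) N : uniq s ->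
  \sum_(k <- s) \sum_(l <- s) uu k * uu (k + l) * ((N < absz k)%N%:R + (N.+1%:R)^-1)
  <= 32 / N.+1%:R.
Proof.
move=> us.
have E : forall k, \sum_(l <- s) uu k * uu (k + l) * ((N < absz k)%N%:R + (N.+1%:R)^-1) =
  \sum_(l <- s) uu k * uu (k + l) * (N < absz k)%N%:R + \sum_(l <- s) uu k * uu (k + l) * (N.+1%:R)^-1.
  by move=> k; rewrite -big_split; apply: eq_bigr => l _; rewrite mulrDr.
under eq_bigr => k _ do rewrite E.
rewrite big_split /=.
have -> : 32 / N.+1%:R = 16 / N.+1%:R + 16 / N.+1%:R :> R by rewrite -mulrDl -natrD.
apply: lerD.
  under eq_bigr => k _ do rewrite -mulr_suml.
  rewrite mulb_sum.
  have -> : 16 / N.+1%:R = (4 / N.+1%:R) * 4 :> R by rewrite mulrAC -natrM.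
  apply: (@double s (fun k => (N < absz k)%N) xpredT) => //; first [by apply: total | by move=> t ut; apply: tail | by move=> t ut; apply: total | by apply: tail | by apply: pt1 | by move=> t ut; apply: pt1 | by rewrite divr_ge0 ?ler0n | exact: uu_ge0].
under eq_bigr => k _ do rewrite -mulr_suml.
rewrite -mulr_suml; apply: ler_wpM2r; first by rewrite invr_ge0 ler0n.
have -> : 16 = 4 * 4 :> R by rewrite -natrM.
apply: (@double s xpredT xpredT) => //; first [by apply: total | by move=> t ut; apply: tail | by move=> t ut; apply: total | by apply: tail | by apply: pt1 | by move=> t ut; apply: pt1 | by rewrite divr_ge0 ?ler0n | exact: uu_ge0].
Qed.

Lemma D_G (s : seq int) a : uniq s ->
  \sum_(k <- s) \sum_(l <- s) uu k * uu (k + l) * ((k == a)%:R + (k + l == a)%:R)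
  <= 8 * uu a.
Proof.
move=> us.
have E : forall k, \sum_(l <- s) uu k * uu (k + l) * ((k == a)%:R + (k + l == a)%:R) =
  \sum_(l <- s) uu k * uu (k + l) * (k == a)%:R + \sum_(l <- s) uu k * uu (k + l) * (k + l == a)%:R.
  by move=> k; rewrite -big_split; apply: eq_bigr => l _; rewrite mulrDr.
under eq_bigr => k _ do rewrite E.
rewrite big_split /=.
have -> : 8 * uu a = uu a * 4 + 4 * uu a :> R.
  by rewrite mulrC -[X in _ + X]mulrC -mulrDr -natrD.
apply: lerD.
  under eq_bigr => k _ do rewrite -mulr_suml.
  rewrite mulb_sum.
  apply: (@double s (fun k => k == a) xpredT) => //; first [by apply: total | by move=> t ut; apply: tail | by move=> t ut; apply: total | by apply: tail | by apply: pt1 | by move=> t ut; apply: pt1 | by rewrite divr_ge0 ?ler0n | exact: uu_ge0].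
under eq_bigr => k _ do rewrite mulb_sum.
apply: (@double s xpredT (fun m => m == a)) => //; first [by apply: total | by move=> t ut; apply: tail | by move=> t ut; apply: total | by apply: tail | by apply: pt1 | by move=> t ut; apply: pt1 | by rewrite divr_ge0 ?ler0n | exact: uu_ge0].
Qed.

End Sums.

Section Cx.
Variable R : rcfType.
Variable c : int -> R[i].
Hypothesis c0 : c 0 = 0.
Hypothesis cN : forall k, c (- k) = c k.
Variable A : R.
Hypothesis A0 : 0 <= A.
Hypothesis cb : forall k, `|c k| <= (A * vv R k)%:C.

Definition FF (k l : int) : R[i] := c k * c l * c (- k - l) / ((k * (k + l))%:~R).

Lemma intrC (z : int) : (z%:~R : R)%:C = z%:~R.
Proof. by rewrite rmorph_int. Qed.

Lemma natrC (n : nat) : (n%:R : R)%:C = n%:R.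
Proof. by rewrite rmorph_nat. Qed.

Lemma norm_intV (z : int) : `|(z%:~R : R[i])^-1| = (vv R z)%:C.
Proof.
by rewrite normfV -intr_norm -abszE /vv fmorphV rmorph_nat.
Qed.

Lemma vvM (k l : int) : vv R (k * l) = vv R k * vv R l.
Proof. by rewrite /vv abszM natrM invfM. Qed.

Lemma F_bound k l : `|FF k l| <= (A ^+ 3 * (uu R k * uu R (k + l) * vv R l))%:C.
Proof.
rewrite /FF !normrM norm_intV -opprD cN vvM.
have -> : (A ^+ 3 * (uu R k * uu R (k + l) * vv R l))%:C =
  (A * vv R k)%:C * (A * vv R l)%:C * (A * vv R (k + l))%:C * (vv R k * vv R (k + l))%:C.
  rewrite -!rmorphM /uu; congr (_%:C); ring.
have nn : forall x : R[i], 0 <= `|x| by move=> x; exact: normr_ge0.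
apply: (@ler_pM (R[i] : numDomainType)); rewrite ?nn ?mulr_ge0 ?nn ?cb ?lexx // ?ler0c ?mulr_ge0 ?vv_ge0 //.
apply: (@ler_pM (R[i] : numDomainType)); rewrite ?nn ?mulr_ge0 ?nn ?cb ?lexx // ?ler0c ?mulr_ge0 ?vv_ge0 //.
by apply: (@ler_pM (R[i] : numDomainType)); rewrite ?nn ?mulr_ge0 ?nn ?cb ?lexx // ?ler0c ?mulr_ge0 ?vv_ge0 //.
Qed.

Lemma Fden0 k l : k * (k + l) = 0 -> FF k l = 0.
Proof. by move=> H; rewrite /FF H invr0 mulr0. Qed.

Lemma F_sym k l : FF k l + FF l k + FF k (- k - l) = 0.
Proof.
have e1 : - l - k = - k - l by ring.
have e2 : - k - (- k - l) = l by ring.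
rewrite /FF e1 e2.
have [->|k0] := eqVneq k 0; first by rewrite c0 !(mul0r, mulr0, add0r).
have [->|l0] := eqVneq l 0; first by rewrite c0 !(mul0r, mulr0, add0r).
have [kl0|kl0] := eqVneq (k + l) 0.
  have -> : - k - l = 0 by rewrite -opprD kl0 oppr0.
  by rewrite c0 !(mul0r, mulr0, add0r).
have -> : l + k = k + l by ring.
have -> : k + (- k - l) = - l by ring.
rewrite !intrM !intrD !intrN.
have hk : (k%:~R : R[i]) != 0 by rewrite intr_eq0.
have hl : (l%:~R : R[i]) != 0 by rewrite intr_eq0.
have hkl : (k%:~R + l%:~R : R[i]) != 0 by rewrite -intrD intr_eq0.
have hlk : (l%:~R + k%:~R : R[i]) != 0 by rewrite addrC.
field.
by rewrite ?hk ?hl ?hkl ?hlk.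
Qed.

Lemma hex_zero N :
  \sum_(k <- rng N) \sum_(l <- rng N | (absz (k + l)%R <= N)%N) FF k l = 0.
Proof.
set s := rng N.
have swap : \sum_(k <- s) \sum_(l <- s | (absz (k + l)%R <= N)%N) FF l k =
            \sum_(k <- s) \sum_(l <- s | (absz (k + l)%R <= N)%N) FF k l.
  transitivity (\sum_(k <- s) \sum_(l <- s) (if (absz (k + l)%R <= N)%N then FF l k else 0)).
    by apply: eq_bigr => k _; rewrite big_mkcond.
  rewrite exchange_big /=; apply: eq_bigr => k _; rewrite [RHS]big_mkcond /=.
  by apply: eq_big => // l _; rewrite addrC.
have refl : \sum_(k <- s) \sum_(l <- s | (absz (k + l)%R <= N)%N) FF k (- k - l) =
            \sum_(k <- s) \sum_(l <- s | (absz (k + l)%R <= N)%N) FF k l.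
  apply: eq_bigr => k _; rewrite -big_filter -[RHS]big_filter.
  set L := [seq l <- s | _].
  rewrite -(big_map (fun l => - k - l) xpredT (FF k)).
  apply: perm_big; apply: uniq_perm.
  - rewrite map_inj_uniq ?filter_uniq ?uniq_rng //.
    by move=> x y /addrI /oppr_inj.
  - by rewrite filter_uniq ?uniq_rng.
  move=> m; apply/mapP/idP.
    move=> [l]; rewrite /L !mem_filter !mem_rng => /andP [H1 H2] ->; apply/andP; lia.
  rewrite /L !mem_filter !mem_rng => /andP [H1 H2].
  exists (- k - m); last by ring.
  rewrite mem_filter mem_rng; apply/andP; lia.
have H3 : \sum_(k <- s) \sum_(l <- s | (absz (k + l)%R <= N)%N)
            (FF k l + FF l k + FF k (- k - l)) = 0.
  by rewrite big1 // => k _; rewrite big1 // => l _; rewrite F_sym.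
set S := \sum_(k <- s) _.
have H4 : S + S + S = 0.
  rewrite -H3; under [RHS]eq_bigr => k _ do rewrite !big_split /=.
  by rewrite !big_split /= swap refl.
have : (3%:R : R[i]) * S = 0 by rewrite -H4; ring.
by move/eqP; rewrite mulf_eq0 pnatr_eq0 /= => /eqP.
Qed.

Lemma normsum2 (s : seq int) (p2 : int -> int -> bool) (f : int -> int -> R[i])
  (B : int -> int -> R) :
  (forall k l, p2 k l -> `|f k l| <= (B k l)%:C) ->
  `|\sum_(k <- s) \sum_(l <- s | p2 k l) f k l| <=
    (\sum_(k <- s) \sum_(l <- s | p2 k l) B k l)%:C.
Proof.
move=> HB; apply: le_trans (ler_norm_sum _ _ _) _.
rewrite rmorph_sum; apply: ler_sum => k _.
apply: le_trans (ler_norm_sum _ _ _) _.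
rewrite rmorph_sum; apply: ler_sum => l H.
exact: HB.
Qed.

Lemma A3_ge0 : 0 <= A ^+ 3. Proof. by rewrite exprn_ge0. Qed.

Lemma bound_F N :
  `|\sum_(k <- rng N) \sum_(l <- rng N) FF k l| <= (A ^+ 3 * (16 / N.+1%:R))%:C.
Proof.
have -> : \sum_(k <- rng N) \sum_(l <- rng N) FF k l =
   \sum_(k <- rng N) \sum_(l <- rng N | (absz (k + l)%R <= N)%N) FF k l +
   \sum_(k <- rng N) \sum_(l <- rng N | (N < absz (k + l)%R)%N) FF k l.
  rewrite -big_split; apply: eq_bigr => k _.
  rewrite (bigID (fun l => (absz (k + l)%R <= N)%N)) /=; congr (_ + _).
  by apply: eq_bigl => l; rewrite -ltnNge.
rewrite hex_zero add0r.
apply: le_trans (@normsum2 _ _ _ (fun k l => A ^+ 3 * (uu R k * uu R (k + l))) _) _.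
  move=> k l _; apply: le_trans (F_bound k l) _; rewrite lecR.
  apply: ler_wpM2l; first exact: A3_ge0.
  rewrite -[X in _ <= X]mulr1 ler_wpM2l ?vv_le1 // mulr_ge0 ?uu_ge0 //.
rewrite lecR; under eq_bigr => k _ do rewrite -mulr_sumr.
rewrite -mulr_sumr; apply: ler_wpM2l; first exact: A3_ge0.
exact: D_hex (uniq_rng N).
Qed.

Definition TT (n : nat) (k l : int) : R[i] :=
  if (k != 0) && (k != - (2 * n)%:Z) && (k + l != 0) && (k + l != - (2 * n)%:Z)
  then FF k l else 0.
Definition GG (n : nat) (k l : int) : R[i] :=
  if (k == - (2 * n)%:Z) || (k + l == - (2 * n)%:Z) then FF k l else 0.

Lemma T_split n k l : TT n k l = FF k l - GG n k l.
Proof.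
rewrite /TT /GG.
have [k0|k0] := eqVneq k 0.
  by rewrite Fden0 ?if_same ?subrr // k0 mul0r.
have [kl0|kl0] := eqVneq (k + l) 0.
  by rewrite Fden0 ?if_same ?subrr // kl0 mulr0.
rewrite /=; case: (k =P _) => [_|_] /=; first by rewrite subrr.
by case: (k + l =P _) => [_|_] /=; rewrite ?subrr ?subr0.
Qed.

Lemma bound_G n N :
  `|\sum_(k <- rng N) \sum_(l <- rng N) GG n k l| <= (A ^+ 3 * (8 * uu R (- (2 * n)%:Z)))%:C.
Proof.
set a := - (2 * n)%:Z.
apply: le_trans (@normsum2 _ _ _ (fun k l => A ^+ 3 *
    (uu R k * uu R (k + l) * ((k == a)%:R + (k + l == a)%:R))) _) _.
  move=> k l _; rewrite /GG -/a.
  have nn : 0 <= A ^+ 3 * (uu R k * uu R (k + l) * ((k == a)%:R + (k + l == a)%:R)).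
    by apply: mulr_ge0; [exact: A3_ge0| apply: mulr_ge0; [apply: mulr_ge0; exact: uu_ge0 | apply: addr_ge0; exact: ler0n]].
  case: ifP => [H|_]; last by rewrite normr0 ler0c.
  apply: le_trans (F_bound k l) _; rewrite lecR.
  apply: ler_wpM2l; first exact: A3_ge0.
  apply: ler_wpM2l; first by rewrite mulr_ge0 ?uu_ge0.
  apply: le_trans (vv_le1 _ l) _.
  move: H; case: (k == a); case: (k + l == a) => //= _; rewrite ?add0r ?addr0 ?ler1n // -natrD ler1n //.
rewrite lecR; under eq_bigr => k _ do rewrite -mulr_sumr.
rewrite -mulr_sumr; apply: ler_wpM2l; first exact: A3_ge0.
exact: D_G (uniq_rng N).
Qed.

Definition Psum (n N : nat) : R[i] := \sum_(k <- rng N) \sum_(l <- rng N) TT n k l.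

Lemma Psum_split n N : Psum n N =
  \sum_(k <- rng N) \sum_(l <- rng N) FF k l - \sum_(k <- rng N) \sum_(l <- rng N) GG n k l.
Proof.
rewrite /Psum -sumrB; apply: eq_bigr => k _; rewrite -sumrB.
by apply: eq_bigr => l _; rewrite T_split.
Qed.

Lemma bound_P n N : `|Psum n N| <=
  (A ^+ 3 * (16 / N.+1%:R) + A ^+ 3 * (8 * uu R (- (2 * n)%:Z)))%:C.
Proof.
rewrite Psum_split rmorphD; apply: le_trans (ler_normB _ _) _.
by apply: lerD; [exact: bound_F | exact: bound_G].
Qed.

Lemma filt_rng N N' : (N <= N')%N ->
  perm_eq [seq k <- rng N' | (absz k <= N)%N] (rng N).
Proof.
move=> H; apply: uniq_perm; rewrite ?filter_uniq ?uniq_rng //.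
move=> k; rewrite mem_filter !mem_rng.
by case: (leqP (absz k) N) => // h /=; apply: leq_trans H.
Qed.

Lemma Psum_diff n N N' : (N <= N')%N -> Psum n N' - Psum n N =
  \sum_(k <- rng N') \sum_(l <- rng N')
     (if ~~ ((absz k <= N)%N && (absz l <= N)%N) then TT n k l else 0).
Proof.
move=> H.
have E : Psum n N = \sum_(k <- rng N') \sum_(l <- rng N')
     (if (absz k <= N)%N && (absz l <= N)%N then TT n k l else 0).
  rewrite /Psum.
  transitivity (\sum_(k <- [seq k <- rng N' | (absz k <= N)%N]) \sum_(l <- rng N) TT n k l).
    by apply: perm_big; rewrite perm_sym filt_rng.
  rewrite big_filter big_mkcond; apply: eq_bigr => k _.
  case: (absz k <= N)%N => /=; last by rewrite big1.
  transitivity (\sum_(l <- [seq l <- rng N' | (absz l <= N)%N]) TT n k l).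
    by apply: perm_big; rewrite perm_sym filt_rng.
  by rewrite big_filter big_mkcond.
rewrite E -sumrB; apply: eq_bigr => k _; rewrite -sumrB; apply: eq_bigr => l _.
by case: ifP => _ /=; rewrite ?subrr ?subr0.
Qed.

Lemma bound_diff n N N' : (N <= N')%N ->
  `|Psum n N' - Psum n N| <= (A ^+ 3 * (32 / N.+1%:R))%:C.
Proof.
move=> H; rewrite Psum_diff //.
apply: le_trans (@normsum2 _ (fun _ _ => true) _ (fun k l => A ^+ 3 *
   (uu R k * uu R (k + l) * ((N < absz k)%N%:R + (N.+1%:R)^-1))) _) _.
  move=> k l _.
  have nn : 0 <= A ^+ 3 * (uu R k * uu R (k + l) * ((N < absz k)%N%:R + (N.+1%:R)^-1)).
    apply: mulr_ge0; [exact: A3_ge0| apply: mulr_ge0; [apply: mulr_ge0; exact: uu_ge0 | ]].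
    by apply: addr_ge0; rewrite ?ler0n ?invr_ge0 ?ler0n.
  case: ifP => [Hc|_]; last by rewrite normr0 ler0c.
  rewrite /TT; case: ifP => _; last by rewrite normr0 ler0c.
  apply: le_trans (F_bound k l) _; rewrite lecR.
  apply: ler_wpM2l; first exact: A3_ge0.
  apply: ler_wpM2l; first by rewrite mulr_ge0 ?uu_ge0.
  case: (ltnP N (absz k)) => hk /=.
    apply: le_trans (vv_le1 _ l) _; rewrite lerDl invr_ge0 ler0n //.
  rewrite add0r; apply: vv_tail.
  by move: Hc; rewrite hk /= -ltnNge.
rewrite lecR; under eq_bigr => k _ do rewrite -mulr_sumr.
rewrite -mulr_sumr; apply: ler_wpM2l; first exact: A3_ge0.
exact: D_cauchy (uniq_rng N').
Qed.

End Cx.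

Section An.
Variable R : realType.

Lemma small_N (K e : R) : 0 < e -> exists N : nat, K / N.+1%:R < e.
Proof.
move=> e0; exists (Num.truncn (`|K| / e)).
rewrite ltr_pdivrMr ?ltr0n // mulrC -ltr_pdivrMr //.
apply: le_lt_trans (truncnS_gt _); apply: ler_wpM2r; first by rewrite invr_ge0 ltW.
exact: ler_norm.
Qed.

Lemma cvg_of_cauchy (x : nat -> R) (K : R) :
  (forall N N', (N <= N')%N -> `|x N' - x N| <= K / N.+1%:R) ->
  cvg (x @ \oo).
Proof.
move=> H; apply: cauchy_cvg; apply: cauchy_exP => e e0.
have [N1 HN1] := small_N K e e0.
exists (x N1); exists N1 => // n hn.
rewrite /ball /= distrC; apply: le_lt_trans (H _ _ hn) HN1.
Qed.

Lemma lim_bound (x : nat -> R) (b K : R) : 0 <= K ->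
  cvg (x @ \oo) -> (forall N, `|x N| <= b + K / N.+1%:R) ->
  `|lim (x @ \oo)| <= b.
Proof.
move=> K0 cx H; apply/ler_addgt0Pr => e e0.
have e20 : 0 < e / 2 by rewrite divr_gt0.
have := cx; move/cvgrPdist_lt => /(_ _ e20) [N2 _ HN2].
have [N1 HN1] := small_N K (e/2) e20.
set N := maxn N1 N2.
have h2 := HN2 N (leq_maxr _ _).
have h1 : K / N.+1%:R <= K / N1.+1%:R.
  apply: ler_wpM2l => //; rewrite lef_pV2 ?posrE ?ltr0n // ler_nat ltnS.
  exact: leq_maxl.
have := H N.
have := ler_distD (x N) (lim (x @ \oo)) 0.
rewrite !subr0 => h3 h4.
apply: le_trans h3 _.

have ee : e = e / 2 + e / 2 by field.
move: ee h2 h1 h4 HN1; set e2 := e / 2; set t1 := K / _; set t2 := K / _ => *; lra.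
Qed.

End An.

Section Main.
Variable R : realType.

Lemma norm_Re (z : R[i]) (b : R) : `|z| <= b%:C -> `|complex.Re z| <= b.
Proof.
rewrite normc_def lecR => H; apply: le_trans H.
rewrite -sqrtr_sqr; apply: ler_wsqrtr; rewrite lerDl; exact: sqr_ge0.
Qed.

Lemma norm_Im (z : R[i]) (b : R) : `|z| <= b%:C -> `|complex.Im z| <= b.
Proof.
rewrite normc_def lecR => H; apply: le_trans H.
rewrite -sqrtr_sqr; apply: ler_wsqrtr; rewrite lerDr; exact: sqr_ge0.
Qed.

Lemma norm_cplx (a b : R) : `|a +i* b| <= (`|a| + `|b|)%:C.
Proof.
rewrite normc_def lecR /=.
have h : 0 <= `|a| + `|b| by rewrite addr_ge0.
rewrite -[X in _ <= X](ger0_norm h) -sqrtr_sqr; apply: ler_wsqrtr.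
rewrite -[a ^+ 2]real_normK ?num_real // -[b ^+ 2]real_normK ?num_real //.
have ha := normr_ge0 a; have hb := normr_ge0 b; nra.
Qed.

Lemma CcoefN (qr qi : R -> R) k : Ccoef qr qi (- k) = Ccoef qr qi k.
Proof.
rewrite /Ccoef.
have E : forall f : R -> R, (fun x => f x * cos ((- k)%:~R * x)) = (fun x => f x * cos (k%:~R * x)).
  by move=> f; apply: funext => x; rewrite intrN mulNr cosN.
by rewrite (E qr) (E qi).
Qed.

Lemma Abound (c : int -> R[i]) : c 0 = 0 -> (forall k, c (- k) = c k) ->
  (exists (M : R) (N0 : nat), forall n : nat, (N0 <= n)%N -> `|c n%:Z| <= (M / n%:R)%:C) ->
  exists A : R, 0 <= A /\ forall k, `|c k| <= (A * vv R k)%:C.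
Proof.
move=> c0 cN [M [N0 HM]].
pose r := fun i : nat => Num.sqrt (complex.Re (c i%:Z) ^+ 2 + complex.Im (c i%:Z) ^+ 2).
have nr : forall i : nat, `|c i%:Z| = (r i)%:C by move=> i; rewrite normc_def.
set A := `|M| + \sum_(i < N0) r i * i%:R.
have sge0 : 0 <= \sum_(i < N0) r i * i%:R.
  by apply: sumr_ge0 => i _; rewrite mulr_ge0 ?sqrtr_ge0 ?ler0n.
exists A; split; first by rewrite addr_ge0.
have key : forall n : nat, `|c n%:Z| <= (A * vv R n%:Z)%:C.
  move=> n; case: (posnP n) => [->|n0].
    by rewrite c0 normr0 /vv /= invr0 mulr0.
  case: (leqP N0 n) => hn.
    apply: le_trans (HM n hn) _; rewrite lecR /vv /=.
    apply: ler_wpM2r; first by rewrite invr_ge0 ler0n.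
    by apply: le_trans (ler_norm M) _; rewrite lerDl.
  rewrite nr lecR /vv /= ler_pdivlMr ?ltr0n //.
  apply: le_trans (_ : _ <= \sum_(i < N0) r i * i%:R) _; last by rewrite lerDr.
  by rewrite (bigD1 (Ordinal hn)) //= lerDl sumr_ge0 // => i _; rewrite mulr_ge0 ?sqrtr_ge0 ?ler0n.
move=> k; case: (lerP 0 k) => k0.
  by have -> : k = (absz k)%:Z by lia.
have -> : k = - (absz k)%:Z by lia.
by rewrite cN vvN.
Qed.

Lemma ord_rng (N : nat) (g : int -> R[i]) :
  \sum_(i < (2 * N).+1) g (i%:Z - N%:Z) = \sum_(k <- rng N) g k.
Proof. by rewrite /rng big_map -(big_mkord xpredT (fun i : nat => g (i%:Z - N%:Z))) /index_iota subn0. Qed.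

End Main.

Theorem proposition1 (R : realType) (qr qi : R -> R) :
  L1_0pi qr -> L1_0pi qi ->
  Ccoef qr qi 0 = 0 ->
  (* q in E : C_n = O(1/n) *)
  (exists (M : R) (N0 : nat), forall n : nat, (N0 <= n)%N ->
     `|Ccoef qr qi n%:Z| <= (M / n%:R)%:C) ->
  (* the double series defining S_1(n,q) converges for every n, and
     S_1(n,q) = O(n^-2) *)
  (forall n : nat,
     cvg ((fun N => (complex.Re (S1_partial qr qi n N) : R)) @ \oo) /\
     cvg ((fun N => (complex.Im (S1_partial qr qi n N) : R)) @ \oo)) /\
  (exists (M : R) (N0 : nat), forall n : nat, (N0 <= n)%N ->
     `|S1 qr qi n| <= (M / (n%:R ^+ 2))%:C).
Proof.
move=> _ _ c0 HE.
have cN := @CcoefN R qr qi.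
have [A [A0 cb]] := @Abound R _ c0 cN HE.
have PS : forall n N, S1_partial qr qi n N = Psum R (Ccoef qr qi) n N.
  move=> n N; rewrite /S1_partial /Psum.
  rewrite (@ord_rng R N (fun k => \sum_(j < (2 * N).+1) S1_term qr qi n k (j%:Z - N%:Z))).
  by apply: eq_bigr => k _; rewrite (@ord_rng R N).
have A3 : 0 <= A ^+ 3 by rewrite exprn_ge0.
have cvRe : forall n, cvg ((fun N => (complex.Re (S1_partial qr qi n N) : R)) @ \oo).
  move=> n; apply: (@cvg_of_cauchy _ _ (A ^+ 3 * 32)) => N N' H.
  rewrite !PS -raddfB -mulrA; apply: (@norm_Re R).
  exact: (@bound_diff R _ cN A A0 cb n N N' H).
have cvIm : forall n, cvg ((fun N => (complex.Im (S1_partial qr qi n N) : R)) @ \oo).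
  move=> n; apply: (@cvg_of_cauchy _ _ (A ^+ 3 * 32)) => N N' H.
  rewrite !PS -raddfB -mulrA; apply: (@norm_Im R).
  exact: (@bound_diff R _ cN A A0 cb n N N' H).
split; first by move=> n; split.
exists (4 * A ^+ 3), 1%N => n n1.
rewrite /S1; apply: le_trans (@norm_cplx R _ _) _; rewrite lecR.
set b := A ^+ 3 * (8 * uu R (- (2 * n)%:Z)).
have hb : forall N, `|S1_partial qr qi n N| <= (b + A ^+ 3 * 16 / N.+1%:R)%:C.
  by move=> N; rewrite PS addrC -mulrA; exact: (@bound_P R _ c0 cN A A0 cb n N).
have h1 : `|lim ((fun N => (complex.Re (S1_partial qr qi n N) : R)) @ \oo)| <= b.
  apply: (@lim_bound R _ b (A ^+ 3 * 16)); [by rewrite mulr_ge0 | exact: cvRe | ].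
  by move=> N; apply: (@norm_Re R); exact: hb.
have h2 : `|lim ((fun N => (complex.Im (S1_partial qr qi n N) : R)) @ \oo)| <= b.
  apply: (@lim_bound R _ b (A ^+ 3 * 16)); [by rewrite mulr_ge0 | exact: cvIm | ].
  by move=> N; apply: (@norm_Im R); exact: hb.
apply: le_trans (lerD h1 h2) _.
rewrite /b /uu /vv abszN /= natrM.
have n0 : n%:R != 0 :> R by rewrite pnatr_eq0 -lt0n.
rewrite le_eqVlt; apply/orP; left; apply/eqP; field; exact: n0.
Qed.
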